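(* Let $A\in\mathbb{C}^{n\times n}$ be Hermitian and $\beta>0$, and consider $f(\mathbf{z})=\frac12\mathbf{z}^*A\mathbf{z}+\frac{\beta}{2}\sum_{k=1}^n|z_k|^4$ on $\mathbb{CS}^{n-1}=\{\mathbf{z}\in\mathbb{C}^n:\|\mathbf{z}\|_2=1\}$. Let $\mathbf{z}\in\mathbb{CS}^{n-1}$ be a stationary point of $\min_{\mathbf{z}\in\mathbb{CS}^{n-1}}f(\mathbf{z})$, i.e. $[A+2\beta\,\mathrm{diag}(|\mathbf{z}|^2)]\mathbf{z}=2\lambda\mathbf{z}$ with $\lambda=\frac12\mathbf{z}^*A\mathbf{z}+\beta\|\mathbf{z}\|_4^4$, and suppose that $H:=A+2\beta\,\mathrm{diag}(|\mathbf{z}|^2)-2\lambda I$ is positive semidefinite. Then $\mathbf{z}$ is a global minimizer of $f$ on $\mathbb{CS}^{n-1}$, and every global minimizer $\mathbf{y}$ of $f$ on $\mathbb{CS}^{n-1}$ belongs to $\llbracket\mathbf{z}\rrbracket=\{\mathbf{y}\in\mathbb{C}^n:|y_k|=|z_k|\ \forall k\in[n]\}$.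
   Context: $|\mathbf{z}|^2$ denotes the componentwise squared modulus vector $(|z_1|^2,\dots,|z_n|^2)$, $\mathrm{diag}(\mathbf{x})$ the diagonal matrix with diagonal $\mathbf{x}$, $[n]=\{1,\dots,n\}$, $\|\mathbf{z}\|_4^4=\sum_k|z_k|^4$. *)

(* Defs.v *)
From mathcomp Require Import all_boot all_algebra complex reals.
Import GRing.Theory Num.Theory.
Set Implicit Arguments. Unset Strict Implicit. Unset Printing Implicit Defensive.
Local Open Scope ring_scope.

Section Defs.
Variable C : numClosedFieldType.
Variable n : nat.

Definition hermitian_mx (A : 'M[C]_n) : Prop := forall i j, A j i = (A i j)^*.

Definition qform (M : 'M[C]_n) (v : 'cV[C]_n) : C :=
  \sum_(i < n) \sum_(j < n) (v i 0)^* * M i j * v j 0.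

Definition sqnorm2 (v : 'cV[C]_n) : C := \sum_(i < n) `|v i 0| ^+ 2.

Definition on_sphere (v : 'cV[C]_n) : Prop := sqnorm2 v = 1.

Definition norm4_4 (v : 'cV[C]_n) : C := \sum_(k < n) `|v k 0| ^+ 4.

Definition sqmod (v : 'cV[C]_n) : 'rV[C]_n := \row_k (`|v k 0| ^+ 2).

Definition fobj (A : 'M[C]_n) (beta : C) (v : 'cV[C]_n) : C :=
  2^-1 * qform A v + beta / 2 * norm4_4 v.

Definition psd (M : 'M[C]_n) : Prop := forall v : 'cV[C]_n, 0 <= qform M v.

Definition global_minimizer (A : 'M[C]_n) (beta : C) (v : 'cV[C]_n) : Prop :=
  on_sphere v /\ forall y, on_sphere y -> fobj A beta v <= fobj A beta y.

Definition same_moduli (z y : 'cV[C]_n) : Prop := forall k, `|y k 0| = `|z k 0|.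

End Defs.

(* Main.v *)
Require Import Defs.
From mathcomp Require Import all_boot all_algebra complex reals.
From mathcomp Require Import order.
Import Order.TTheory GRing.Theory Num.Theory.
Local Open Scope ring_scope.
From mathcomp Require Import ring.

Section Aux.
Variable C : numClosedFieldType.
Variable n : nat.

Lemma qformD (M N : 'M[C]_n) v : qform (M + N) v = qform M v + qform N v.
Proof.
rewrite /qform -big_split; apply: eq_bigr => i _.
rewrite -big_split; apply: eq_bigr => j _; rewrite mxE /=; ring.
Qed.

Lemma qformN (M : 'M[C]_n) v : qform (- M) v = - qform M v.
Proof.
rewrite /qform -sumrN; apply: eq_bigr => i _.
rewrite -sumrN; apply: eq_bigr => j _; rewrite mxE /=; ring.
Qed.

Lemma qformZ (c : C) (M : 'M[C]_n) v : qform (c *: M) v = c * qform M v.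
Proof.
rewrite /qform mulr_sumr; apply: eq_bigr => i _.
rewrite mulr_sumr; apply: eq_bigr => j _; rewrite mxE /=; ring.
Qed.

Lemma qform_diag (M : 'M[C]_n) v : (forall i j, i != j -> M i j = 0) ->
  qform M v = \sum_(i < n) `|v i 0| ^+ 2 * M i i.
Proof.
move=> HM; rewrite /qform; apply: eq_bigr => i _.
rewrite (bigD1 i) //= big1 ?addr0; last first.
  by move=> j /negbTE Hj; rewrite HM ?mulr0 ?mul0r // eq_sym Hj.
rewrite normCK; ring.
Qed.

Lemma sqd_ge0 (x y : C) : 0 <= (`|x| ^+ 2 - `|y| ^+ 2) ^+ 2.
Proof. by rewrite -realEsqr rpredB ?rpredX ?normr_real. Qed.

End Aux.

Theorem theorem1 (R : realType) (n : nat) (A : 'M[R[i]]_n) (beta : R)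
  (z : 'cV[R[i]]_n) :
  hermitian_mx A -> 0 < beta -> on_sphere z ->
  let lambda := 2^-1 * qform A z + (beta%:C)%C * norm4_4 z in
  (A + 2 * (beta%:C)%C *: diag_mx (sqmod z)) *m z = (2 * lambda) *: z ->
  psd (A + 2 * (beta%:C)%C *: diag_mx (sqmod z) - (2 * lambda)%:M) ->
  global_minimizer A (beta%:C)%C z /\
  (forall y : 'cV[R[i]]_n, global_minimizer A (beta%:C)%C y -> same_moduli z y).
Proof.
move=> _ hb hz lambda _ Hpsd.
set b := (beta%:C)%C.
have hb' : 0 < b by rewrite /b ltcR.
have key : forall y : 'cV[R[i]]_n, on_sphere y ->
  fobj A b y - fobj A b z =
  2^-1 * qform (A + 2 * b *: diag_mx (sqmod z) - (2 * lambda)%:M) y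
  + b / 2 * \sum_(k < n) (`|y k 0| ^+ 2 - `|z k 0| ^+ 2) ^+ 2.
  move=> y hy.
  rewrite qformD qformN qformD qformZ.
  rewrite (@qform_diag _ _ (diag_mx (sqmod z)) y); last first.
    by move=> i j /negbTE Hij; rewrite mxE Hij mulr0n.
  rewrite (@qform_diag _ _ ((2 * lambda)%:M) y); last first.
    by move=> i j /negbTE Hij; rewrite mxE Hij mulr0n.
  have -> : \sum_(i < n) `|y i 0| ^+ 2 * (2 * lambda)%:M i i = 2 * lambda.
    rewrite -[RHS]mul1r -hy /sqnorm2 mulr_suml; apply: eq_bigr => i _.
    by rewrite mxE eqxx mulr1n.
  have -> : \sum_(k < n) (`|y k 0| ^+ 2 - `|z k 0| ^+ 2) ^+ 2 =
     norm4_4 y - 2 * \sum_(i < n) `|y i 0| ^+ 2 * diag_mx (sqmod z) i i + norm4_4 z.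
    rewrite /norm4_4 mulr_sumr -sumrN -!big_split; apply: eq_bigr => i _ /=.
    rewrite !mxE eqxx mulr1n; ring.
  rewrite /fobj /lambda.
  set S := \sum_(i < n) _.
  have h2 : (2 : R[i]) != 0 by rewrite pnatr_eq0.
  by field.
have T0 : forall y : 'cV[R[i]]_n, 0 <= \sum_(k < n) (`|y k 0| ^+ 2 - `|z k 0| ^+ 2) ^+ 2.
  move=> y; apply: sumr_ge0 => k _; exact: sqd_ge0.
have Hge : forall y : 'cV[R[i]]_n, on_sphere y -> 
  b / 2 * \sum_(k < n) (`|y k 0| ^+ 2 - `|z k 0| ^+ 2) ^+ 2 <= fobj A b y - fobj A b z.
  move=> y hy; rewrite key // lerDr mulr_ge0 ?invr_ge0 ?ler0n //.
split.
  split => // y hy; rewrite -subr_ge0.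
  apply: le_trans (Hge y hy); rewrite mulr_ge0 ?T0 // divr_ge0 ?ler0n ?ltW //.
move=> y [hy Hmin] k.
have H1 := Hge y hy.
have H2 : fobj A b y - fobj A b z <= 0 by rewrite subr_le0; exact: Hmin.
have HT : \sum_(k < n) (`|y k 0| ^+ 2 - `|z k 0| ^+ 2) ^+ 2 = 0 :> R[i].
  apply/eqP; rewrite eq_le T0 andbT.
  have : b / 2 * \sum_(k < n) (`|y k 0| ^+ 2 - `|z k 0| ^+ 2) ^+ 2 <= 0.
    exact: le_trans H1 H2.
  by rewrite pmulr_rle0 // divr_gt0 ?ltr0n.
have Hk : (`|y k 0| ^+ 2 - `|z k 0| ^+ 2) ^+ 2 = 0.
  by apply: (psumr_eq0P _ HT) => // j _; exact: sqd_ge0.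
apply/eqP; rewrite -(@eqrXn2 _ 2) // -subr_eq0 -sqrf_eq0 Hk eqxx.
by [].
Qed.
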